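(* Let $\mu>0$, $\sigma>0$, $r=\sigma/\mu$, and let $k$ be the unique real solution of $\frac1r=\frac12(3k+k^3)$. Let $\tilde\rho=\frac{1}{1-\frac32rk}$ and $p=\mu-k\sigma$. Then $\tilde\rho$ is the unique solution in $[1,\infty)$ of $\frac{27}{4}r^2=\frac{(\tilde\rho-1)^3}{\tilde\rho^2}$, and moreover $1+\frac{27}{4}r^2\le\tilde\rho\le3+\frac{27}{4}r^2$ and $p=\frac{\tilde\rho+2}{3\tilde\rho}\mu$. *)

(* Defs.v *)
From Stdlib Require Import Reals.
Open Scope R_scope.

(* Main.v *)
Require Import Defs.
From Stdlib Require Import Reals Lra Psatz.
Open Scope R_scope.

Theorem lemma8 (mu sigma k : R) (hmu : 0 < mu) (hsigma : 0 < sigma)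
  (hk : 1 / (sigma / mu) = (3 * k + k ^ 3) / 2) :
  let r := sigma / mu in
  let rho := 1 / (1 - 3 / 2 * r * k) in
  let p := mu - k * sigma in
  (1 <= rho /\ 27 / 4 * r ^ 2 = (rho - 1) ^ 3 / rho ^ 2 /\
   (forall x : R, 1 <= x -> 27 / 4 * r ^ 2 = (x - 1) ^ 3 / x ^ 2 -> x = rho)) /\
  1 + 27 / 4 * r ^ 2 <= rho /\ rho <= 3 + 27 / 4 * r ^ 2 /\
  p = (rho + 2) / (3 * rho) * mu.
Proof.
  intros r rho p.
  assert (hr0 : 0 < r) by (unfold r; apply Rdiv_lt_0_compat; lra).
  assert (hpos : 0 < 1 / r) by (apply Rdiv_lt_0_compat; lra).
  fold r in hk.
  assert (hkp : 0 < k) by nra.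
  assert (hk3 : 0 < 3 + k^2) by nra.
  assert (hr : r = 2 / (k * (3 + k^2))).
  { assert (r * (3 * k + k^3) = 2).
    { replace (3 * k + k^3) with (2 * (1 / r)) by lra. field. lra. }
    apply (Rmult_eq_reg_r (k * (3 + k^2))); [|nra].
    field_simplify; [nra|nra]. }
  assert (hrho : rho = (3 + k^2) / k^2).
  { unfold rho. rewrite hr. field. split; nra. }
  assert (hp : p = mu * (1 - k * r)).
  { unfold p, r. field. lra. }
  set (u := 3 / k^2).
  assert (hu : 0 < u) by (unfold u; apply Rdiv_lt_0_compat; nra).
  assert (hrho' : rho = 1 + u) by (rewrite hrho; unfold u; field; nra).
  assert (hq : 27 / 4 * r ^ 2 = u^3 / (1+u)^2).
  { rewrite hr; unfold u. field. split; nra. }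
  clearbody rho p. clear hrho. subst rho.
  rewrite hq.
  split; [split; [lra | split] |].
  - field. lra.
  - intros x hx hg.
    assert (hx2 : 0 < x) by lra.
    assert (E : (x - 1)^3 * (1+u)^2 = u^3 * x^2).
    { apply (Rmult_eq_reg_r (/ (x^2 * (1+u)^2))).
      2: { apply Rinv_neq_0_compat. nra. }
      replace ((x - 1)^3 * (1+u)^2 * / (x^2 * (1+u)^2)) with ((x-1)^3/x^2) by (field; lra).
      rewrite <- hg. field. split; lra. }
    set (a := x - 1) in *.
    assert (ha : 0 <= a) by (unfold a; lra).
    replace x with (1 + a) in E by (unfold a; ring).
    assert (F : (a - u) * (a^2 + a*u + u^2 + 2*a*u*(a+u) + a^2*u^2) = 0) by nra.
    assert (G : 0 < a^2 + a*u + u^2 + 2*a*u*(a+u) + a^2*u^2) by nra.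
    apply Rmult_integral in F. destruct F as [F|F]; [unfold a in F; lra | lra].
  - assert (h1 : u^3 / (1+u)^2 <= u).
    { apply (Rmult_le_reg_r ((1+u)^2)); [nra|].
      replace (u^3 / (1+u)^2 * (1+u)^2) with (u^3) by (field; lra). nra. }
    assert (h2 : u - 2 <= u^3 / (1+u)^2).
    { apply (Rmult_le_reg_r ((1+u)^2)); [nra|].
      replace (u^3 / (1+u)^2 * (1+u)^2) with (u^3) by (field; lra). nra. }
    split; [lra | split; [lra|]].
    rewrite hp, hr. unfold u. field. split; nra.
Qed.
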